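(* Let $f:[0,1]\to\mathbb{R}$ be a continuous function such that $f(0)=0$ and $f(1)=1$, and let $\gamma(t)=(t,f(t))$, $t\in[0,1]$. Then for each $n\in\mathbb{N}$ there exist points $A_0,A_1,\ldots,A_{n+1}$ on $\gamma$ such that $A_0=(0,0)$, $A_{n+1}=(1,1)$, all the numbers $\pi_1(\overrightarrow{A_iA_{i+1}})$ and $\pi_2(\overrightarrow{A_iA_{i+1}})$, $i=0,\ldots,n$, are strictly positive, and the two sequences $\big(\pi_1(\overrightarrow{A_iA_{i+1}})\big)_{i=0}^{n}$ and $\big(\pi_2(\overrightarrow{A_iA_{i+1}})\big)_{i=0}^{n}$ are the same after a rearrangement.
   Context: $\pi_1,\pi_2:\mathbb{R}^2\to\mathbb{R}$ denote the projections onto the $x$-axis and the $y$-axis, $\pi_1(a,b)=a$, $\pi_2(a,b)=b$. For points $A,B\in\mathbb{R}^2$, $\overrightarrow{AB}=B-A$. *)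

(* Defs.v *)
From Stdlib Require Import Reals List Permutation.
Open Scope R_scope.

Definition continuous_on_01 (f : R -> R) : Prop :=
  forall x, 0 <= x <= 1 ->
    forall eps, 0 < eps -> exists delta, 0 < delta /\
      forall y, 0 <= y <= 1 -> Rabs (y - x) < delta -> Rabs (f y - f x) < eps.

Definition gamma (f : R -> R) (t : R) : R * R := (t, f t).

Definition pi1 (P : R * R) : R := fst P.
Definition pi2 (P : R * R) : R := snd P.

Definition vec (A B : R * R) : R * R := (fst B - fst A, snd B - snd A).

(* Main.v *)
Require Import Defs.
From Stdlib Require Import Reals List Permutation Lia Lra Classical.
Open Scope R_scope.

Definition gc (h : R -> R) : Prop :=
  forall x eps, 0 < eps -> exists d, 0 < d /\ forall y, Rabs (y - x) < d -> Rabs (h y - h x) < eps.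

Lemma gc_cont h : gc h -> continuity h.
Proof.
  intros H x eps He. destruct (H x eps He) as [d [Hd Hy]].
  exists d. split; [lra|]. intros y [_ Hyx]. simpl. unfold R_dist. apply Hy. exact Hyx.
Qed.

Lemma gc_comp g h : gc g -> gc h -> gc (fun x => h (g x)).
Proof.
  intros Hg Hh x eps He. destruct (Hh (g x) eps He) as [d1 [Hd1 H1]].
  destruct (Hg x d1 Hd1) as [d2 [Hd2 H2]]. exists d2. split; auto.
Qed.

Lemma gc_plus g h : gc g -> gc h -> gc (fun x => g x + h x).
Proof.
  intros Hg Hh x eps He.
  destruct (Hg x (eps/2)) as [d1 [Hd1 H1]]; [lra|].
  destruct (Hh x (eps/2)) as [d2 [Hd2 H2]]; [lra|].
  exists (Rmin d1 d2). split. apply Rmin_pos; auto.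
  intros y Hy. pose proof (Rmin_l d1 d2). pose proof (Rmin_r d1 d2).
  specialize (H1 y ltac:(lra)). specialize (H2 y ltac:(lra)).
  replace (g y + h y - (g x + h x)) with ((g y - g x) + (h y - h x)) by ring.
  eapply Rle_lt_trans. apply Rabs_triang. lra.
Qed.

Lemma gc_id : gc (fun x => x).
Proof. intros x eps He. exists eps. split; auto. Qed.

Lemma gc_const k : gc (fun _ => k).
Proof. intros x eps He. exists 1. split; [lra|]. intros. rewrite Rminus_diag, Rabs_R0. auto. Qed.

Definition clamp (a b x : R) := Rmax a (Rmin b x).

Lemma clamp_lip a b x y : Rabs (clamp a b y - clamp a b x) <= Rabs (y - x).
Proof.
  unfold clamp, Rmax, Rmin.
  repeat (destruct Rle_dec); repeat (destruct (Rle_dec _ _)); unfold Rabs;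
  repeat destruct Rcase_abs; lra.
Qed.

Lemma clamp_in a b x : a <= b -> a <= clamp a b x <= b.
Proof. unfold clamp, Rmax, Rmin. intros. repeat destruct Rle_dec; lra. Qed.

Lemma clamp_id a b x : a <= x <= b -> clamp a b x = x.
Proof. unfold clamp, Rmax, Rmin. intros. repeat destruct Rle_dec; lra. Qed.

Lemma clamp_hi a b x : a <= b -> b <= x -> clamp a b x = b.
Proof. unfold clamp, Rmax, Rmin. intros. repeat destruct Rle_dec; lra. Qed.

Lemma clamp_mono a b x y : x <= y -> clamp a b x <= clamp a b y.
Proof. unfold clamp, Rmax, Rmin. intros. repeat destruct Rle_dec; lra. Qed.

Lemma gc_clamp a b : gc (clamp a b).
Proof.
  intros x eps He. exists eps. split; auto. intros y Hy.
  eapply Rle_lt_trans. apply clamp_lip. auto.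
Qed.

Definition cont_on (f : R -> R) (a b : R) : Prop :=
  forall x, a <= x <= b ->
    forall eps, 0 < eps -> exists delta, 0 < delta /\
      forall y, a <= y <= b -> Rabs (y - x) < delta -> Rabs (f y - f x) < eps.

Lemma gc_ext f a b : a <= b -> cont_on f a b -> gc (fun x => f (clamp a b x)).
Proof.
  intros Hab Hf x eps He.
  destruct (Hf (clamp a b x) (clamp_in a b x Hab) eps He) as [d [Hd H]].
  exists d. split; auto. intros y Hy. apply H. apply clamp_in; auto.
  eapply Rle_lt_trans. apply clamp_lip. auto.
Qed.

Definition chain (f : R -> R) (a b : R) (n : nat) (T : nat -> R) : Prop :=
  T 0%nat = a /\ T (S n) = b /\
  (forall i, (i <= S n)%nat -> a <= T i <= b) /\
  (forall i, (i <= n)%nat -> T i < T (S i) /\ f (T i) < f (T (S i))) /\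
  Permutation (map (fun i => T (S i) - T i) (seq 0 (S n)))
              (map (fun i => f (T (S i)) - f (T i)) (seq 0 (S n))).

Fixpoint iter_fn (s : R -> R) (x0 : R) (k : nat) : R :=
  match k with O => x0 | S k => s (iter_fn s x0 k) end.

Lemma typeA f a b n : a < b -> cont_on f a b -> f a = a -> f b = b ->
  (forall t, a <= t <= b -> t <= f t) -> exists T, chain f a b n T.
Proof.
  intros Hab Hf Ha Hb Hge.
  set (F := fun x => f (clamp a b x)).
  assert (HF : gc F) by (apply gc_ext; auto; lra).
  set (it := fun c k => iter_fn (fun x => clamp a b (c + F x)) a k).
  assert (Hitc : forall k, gc (fun c => it c k)).
  { induction k.
    - apply (gc_const a).
    - change (gc (fun c => clamp a b (c + F (it c k)))). apply (gc_comp (fun c => c + F (it c k)) (clamp a b)); [|apply gc_clamp].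
      apply gc_plus; [apply gc_id|]. apply (gc_comp _ F); auto. }
  assert (Hin : forall c k, a <= it c k <= b).
  { intros c [|k]. unfold it; simpl; lra. apply clamp_in; lra. }
  assert (HFe : forall x, a <= x <= b -> F x = f x).
  { intros x Hx. unfold F. rewrite clamp_id; auto. }
  assert (H0 : forall k, it 0 k = a).
  { induction k. reflexivity. change (it 0 (S k)) with (clamp a b (0 + F (it 0 k))). rewrite IHk.
    rewrite HFe by lra. rewrite Ha, Rplus_0_l. apply clamp_id; lra. }
  set (h := fun c => c + F (it c n) - b).
  assert (Hh : continuity h).
  { apply gc_cont. unfold h. apply gc_plus; [|apply gc_const].
    apply gc_plus; [apply gc_id|]. apply (gc_comp _ F); auto. }
  destruct (IVT_cor h 0 (b - a) Hh ltac:(lra)) as [c [Hc Hhc]].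
  { unfold h. rewrite H0. rewrite HFe by lra. rewrite Ha.
    rewrite HFe by auto. pose proof (Hge _ (Hin (b-a) n)). pose proof (Hin (b-a) n).
    nra. }
  unfold h in Hhc. rewrite HFe in Hhc by auto.
  assert (Hcp : 0 < c).
  { destruct (Rle_lt_or_eq_dec 0 c) as [|E]; [lra|auto|].
    subst c. rewrite H0, Ha in Hhc. lra. }
  assert (Hn : it c n < b).
  { destruct (Hin c n) as [_ [|E]]; auto. rewrite E, Hb in Hhc. lra. }
  assert (Hmono : forall k, it c k <= it c (S k)).
  { intro k. change (it c (S k)) with (clamp a b (c + F (it c k))).
    rewrite HFe by auto. rewrite <- (clamp_id a b (it c k)) at 1 by auto.
    apply clamp_mono. pose proof (Hge _ (Hin c k)). lra. }
  assert (Hle : forall k, (k <= n)%nat -> it c k <= it c n).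
  { intros k Hk. clear -Hmono Hk. induction Hk. lra. pose proof (Hmono m). lra. }
  assert (Hstep : forall k, (k <= n)%nat -> it c (S k) = c + f (it c k)).
  { intros k Hk. change (it c (S k)) with (clamp a b (c + F (it c k))).
    rewrite HFe by auto.
    destruct (Nat.eq_dec k n) as [->|Hne].
    - rewrite clamp_id; lra.
    - pose proof (Hge _ (Hin c k)). pose proof (Hin c k).
      destruct (Rle_lt_dec (c + f (it c k)) b).
      + apply clamp_id; lra.
      + exfalso. assert (E : it c (S k) = b).
        { change (it c (S k)) with (clamp a b (c + F (it c k))).
          rewrite HFe by auto. apply clamp_hi; lra. }
        pose proof (Hle (S k) ltac:(lia)). lra. }
  assert (HSn : it c (S n) = b) by (rewrite Hstep by lia; lra).
  assert (Hinc : forall i, (i <= n)%nat -> it c i < it c (S i)).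
  { intros i Hi. rewrite Hstep by auto. pose proof (Hge _ (Hin c i)). lra. }
  assert (Hy : forall i, (i < n)%nat -> f (it c (S i)) - f (it c i) = it c (S (S i)) - it c (S i)).
  { intros i Hi. rewrite (Hstep (S i)) by lia. rewrite (Hstep i) by lia. ring. }
  assert (Hyn : f (it c (S n)) - f (it c n) = it c 1%nat - it c 0%nat).
  { rewrite HSn, Hb. rewrite (Hstep 0%nat) by lia. change (it c 0%nat) with a. rewrite Ha. lra. }
  exists (it c). split; [reflexivity|]. split; [exact HSn|]. split; [intros; auto|].
  split.
  - intros i Hi. split. apply Hinc; auto.
    destruct (Nat.eq_dec i n) as [->|Hne].
    + pose proof Hyn. pose proof (Hinc 0%nat ltac:(lia)). lra.
    + pose proof (Hy i ltac:(lia)). pose proof (Hinc (S i) ltac:(lia)). lra.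
  - set (xg := fun i => it c (S i) - it c i).
    change (Permutation (map xg (seq 0 (S n))) (map (fun i => f (it c (S i)) - f (it c i)) (seq 0 (S n)))).
    rewrite (seq_S n 0) at 2. rewrite map_app. rewrite Nat.add_0_l. cbn [map]. cbv beta.
    replace (map (fun i => f (it c (S i)) - f (it c i)) (seq 0 n)) with (map xg (seq 1 n)).
    + rewrite Hyn. change (it c 1%nat - it c 0%nat) with (xg 0%nat).
      change (seq 0 (S n)) with (0%nat :: seq 1 n). simpl map.
      apply Permutation_cons_append.
    + rewrite <- seq_shift, map_map. apply map_ext_in. intros i Hi.
      apply in_seq in Hi. unfold xg. rewrite Hy by lia. reflexivity.
Qed.

Lemma map_rev_seq (h : nat -> R) n :
  map (fun i => h (n - i)%nat) (seq 0 (S n)) = rev (map h (seq 0 (S n))).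
Proof.
  revert h. induction n; intros h. reflexivity.
  transitivity (h (S n) :: map (fun i => h (n - i)%nat) (seq 0 (S n))).
  - change (seq 0 (S (S n))) with (0%nat :: seq 1 (S n)).
    rewrite <- seq_shift. cbn [map]. rewrite map_map. reflexivity.
  - rewrite IHn. rewrite (seq_S (S n) 0), map_app, rev_app_distr. reflexivity.
Qed.

Lemma chain_rev f a b n U :
  chain (fun x => a + b - f (a + b - x)) a b n U ->
  chain f a b n (fun i => a + b - U (S n - i)%nat).
Proof.
  set (ft := fun x => a + b - f (a + b - x)).
  assert (Hft : forall x, f (a + b - x) = a + b - ft x) by (intros; unfold ft; ring).
  intros [H0 [HSn [Hb [Hinc Hp]]]].
  split; [rewrite Nat.sub_0_r, HSn; ring|].
  split; [rewrite Nat.sub_diag, H0; ring|].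
  split; [intros i Hi; specialize (Hb (S n - i)%nat ltac:(lia)); lra|].
  assert (E1 : forall i, (i <= n)%nat -> (S n - i)%nat = S (n - i)) by (intros; lia).
  assert (E2 : forall i, (i <= n)%nat -> (S n - S i)%nat = (n - i)%nat) by (intros; lia).
  split.
  - intros i Hi. rewrite E2, E1 by auto. rewrite !Hft.
    destruct (Hinc (n - i)%nat ltac:(lia)). lra.
  -
    assert (EX : map (fun i => a + b - U (S n - S i)%nat - (a + b - U (S n - i)%nat)) (seq 0 (S n))
                 = rev (map (fun j => U (S j) - U j) (seq 0 (S n)))).
    { rewrite <- map_rev_seq. apply map_ext_in. intros i Hi. apply in_seq in Hi.
      rewrite E2, E1 by lia. ring. }
    assert (EY : map (fun i => f (a + b - U (S n - S i)%nat) - f (a + b - U (S n - i)%nat)) (seq 0 (S n))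
                 = rev (map (fun j => ft (U (S j)) - ft (U j)) (seq 0 (S n)))).
    { rewrite <- map_rev_seq. apply map_ext_in. intros i Hi. apply in_seq in Hi.
      rewrite E2, E1 by lia. rewrite !Hft. ring. }
    rewrite EX, EY.
    eapply Permutation_trans. apply Permutation_sym, Permutation_rev.
    eapply Permutation_trans. apply Hp. apply Permutation_rev.
Qed.

Lemma typeB f a b n : a < b -> cont_on f a b -> f a = a -> f b = b ->
  (forall t, a <= t <= b -> f t <= t) -> exists T, chain f a b n T.
Proof.
  intros Hab Hf Ha Hb Hle.
  destruct (typeA (fun x => a + b - f (a + b - x)) a b n Hab) as [U HU].
  - intros x Hx eps He. destruct (Hf (a + b - x) ltac:(lra) eps He) as [d [Hd H]].
    exists d. split; auto. intros y Hy Hyx.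
    replace (a + b - f (a + b - y) - (a + b - f (a + b - x))) with (- (f (a+b-y) - f (a+b-x))) by ring.
    rewrite Rabs_Ropp. apply H. lra.
    replace (a + b - y - (a + b - x)) with (- (y - x)) by ring. rewrite Rabs_Ropp. auto.
  - replace (a + b - a) with b by ring. rewrite Hb. ring.
  - replace (a + b - b) with a by ring. rewrite Ha. ring.
  - intros t Ht. pose proof (Hle (a + b - t) ltac:(lra)). lra.
  - exists (fun i => a + b - U (S n - i)%nat). apply chain_rev. auto.
Qed.

Lemma chain_cons f a p b m T2 : a < p -> f a = a -> f p = p -> chain f p b m T2 ->
  chain f a b (S m) (fun i => match i with O => a | S j => T2 j end).
Proof.
  intros Hap Ha Hp [H0 [HSn [Hb [Hinc Hperm]]]].
  split; [reflexivity|]. split; [exact HSn|].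
  split.
  { intros [|i] Hi. pose proof (Hb 0%nat ltac:(lia)). lra.
    pose proof (Hb i ltac:(lia)). lra. }
  split.
  { intros [|i] Hi. rewrite H0, Ha, Hp. lra. apply Hinc. lia. }
  change (seq 0 (S (S m))) with (0%nat :: seq 1 (S m)).
  rewrite <- seq_shift. cbn [map]. rewrite !map_map. rewrite H0, Ha, Hp.
  apply perm_skip. exact Hperm.
Qed.

Theorem main n : forall f a b, a < b -> cont_on f a b -> f a = a -> f b = b ->
  exists T, chain f a b n T.
Proof.
  induction n; intros f a b Hab Hf Ha Hb.
  - exists (fun i => match i with O => a | _ => b end).
    split; [reflexivity|]. split; [reflexivity|].
    split. { intros [|i] _; lra. }
    split. { intros i Hi. assert (i = 0%nat) by lia. subst. rewrite Ha, Hb. lra. }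
    simpl. rewrite Ha, Hb. apply Permutation_refl.
  - destruct (classic (exists p, a < p < b /\ f p = p)) as [[p [Hp Hfp]]|Hno].
    + destruct (IHn f p b ltac:(lra)) as [T2 HT2]; auto.
      { intros x Hx eps He. destruct (Hf x ltac:(lra) eps He) as [d [Hd H]].
        exists d. split; auto. intros y Hy. apply H. lra. }
      eexists. apply (chain_cons f a p b n T2); auto. lra.
    + destruct (classic (forall t, a <= t <= b -> t <= f t)) as [Hge|Hnge].
      * apply typeA; auto.
      * apply typeB; auto.
        intros t Ht. destruct (Rle_dec (f t) t) as [|Hlt]; auto. exfalso.
        apply not_all_ex_not in Hnge. destruct Hnge as [s Hs].
        apply imply_to_and in Hs. destruct Hs as [Hs Hfs].
        set (F := fun x => f (clamp a b x) - x).
        assert (HF : continuity F).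
        { apply gc_cont. unfold F. apply gc_plus. apply gc_ext; auto; lra.
          apply (gc_comp (fun x => x) (fun x => - x)). apply gc_id.
          intros x eps He. exists eps. split; auto. intros y Hy.
          replace (- y - - x) with (- (y - x)) by ring. rewrite Rabs_Ropp. auto. }
        assert (Fs : F s < 0) by (unfold F; rewrite clamp_id by lra; lra).
        assert (Ft : F t > 0) by (unfold F; rewrite clamp_id by lra; lra).
        assert (Hsi : a < s < b).
        { destruct Hs as [Hs1 Hs2]. destruct (Rle_lt_or_eq_dec _ _ Hs1); [|subst; lra].
          destruct (Rle_lt_or_eq_dec _ _ Hs2); [|subst; lra]. lra. }
        assert (Hti : a < t < b).
        { destruct Ht as [Ht1 Ht2]. destruct (Rle_lt_or_eq_dec _ _ Ht1); [|subst; lra].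
          destruct (Rle_lt_or_eq_dec _ _ Ht2); [|subst; lra]. lra. }
        destruct (Rle_dec s t).
        -- destruct (IVT_cor F s t HF r ltac:(nra)) as [z [Hz Fz]].
           apply Hno. exists z. split; [lra|]. unfold F in Fz. rewrite clamp_id in Fz by lra. lra.
        -- destruct (IVT_cor F t s HF ltac:(lra) ltac:(nra)) as [z [Hz Fz]].
           apply Hno. exists z. split; [lra|]. unfold F in Fz. rewrite clamp_id in Fz by lra. lra.
Qed.

Theorem corollary1 (f : R -> R) (hf : continuous_on_01 f)
  (hf0 : f 0 = 0) (hf1 : f 1 = 1) (n : nat) :
  exists A : nat -> R * R,
    (forall i, (i <= S n)%nat -> exists t, 0 <= t <= 1 /\ A i = gamma f t) /\
    A 0%nat = (0, 0) /\ A (S n) = (1, 1) /\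
    (forall i, (i <= n)%nat ->
       0 < pi1 (vec (A i) (A (S i))) /\ 0 < pi2 (vec (A i) (A (S i)))) /\
    Permutation (map (fun i => pi1 (vec (A i) (A (S i)))) (seq 0 (S n)))
                (map (fun i => pi2 (vec (A i) (A (S i)))) (seq 0 (S n))).
Proof.
  destruct (main n f 0 1 ltac:(lra) hf hf0 hf1) as [T [H0 [HSn [Hb [Hinc Hp]]]]].
  exists (fun i => gamma f (T i)).
  split. { intros i Hi. exists (T i). split; auto. }
  split. { unfold gamma. rewrite H0, hf0. reflexivity. }
  split. { unfold gamma. rewrite HSn, hf1. reflexivity. }
  split. { intros i Hi. unfold pi1, pi2, vec, gamma; simpl. destruct (Hinc i Hi). lra. }
  exact Hp.
Qed.
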